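(* Fix parameters $\mathfrak h=(h,\varepsilon,\theta)$. Let $\chi$ satisfy (OBS.1) and $f$ satisfy (RHS.2); if (RHS.2b) holds, assume moreover that condition (M.1) holds. Let $w_h,v_h\in\mathbb V_h$ satisfy $$\mathbb T_{\mathfrak h}[w_h;f,\chi](z)\le0\le\mathbb T_{\mathfrak h}[v_h;f,\chi](z)\qquad\forall z\in\mathcal N_h^I,$$ and $w_h(z)\le v_h(z)$ for all $z\in\mathcal N_h^b$. Then $w_h(z)\le v_h(z)$ for all $z\in\mathcal N_h$.
   Context: Setting: $\Omega\subset\mathbb R^d$ ($d\ge1$) is a bounded domain with continuous boundary. For $r>0$, $\Omega^{(r)}=\{x\in\Omega:\operatorname{dist}(x,\partial\Omega)>r\}$. $\mathcal T_h$ is a mesh of closed simplices, $h=\max_T\operatorname{diam}T$, $\Omega_h$ the interior of the union of the simplices, with $\Omega^{(h)}\subset\Omega_h\subset\Omega$; $\mathcal N_h$ is the set of vertices. $\mathbb V_h$ is the space of continuous piecewise linear functions on $\mathcal T_h$ with hat basis $\{\hat\varphi_z\}$ and Lagrange interpolant $\mathcal I_h$. Parameters $\mathfrak h=(h,\varepsilon,\theta)$ with $\varepsilon\in[h,\operatorname{diam}\Omega]$, $0<\theta\le1$. $\mathcal N_h^I=\mathcal N_h\cap\Omega^{(2\varepsilon)}$, $\mathcal N_h^b=\mathcal N_h\setminus\mathcal N_h^I$. $\mathbb S_\theta$ is a finite symmetric subset of the unit sphere $\mathbb S$ such that each $v\in\mathbb S$ has $v_\theta\in\mathbb S_\theta$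 with $|v-v_\theta|\le\theta$. For $z\in\mathcal N_h^I$, $\mathcal N_{\mathfrak h}(z)=\{z\}\cup\{z+\varepsilon v_\theta:v_\theta\in\mathbb S_\theta\}$ and $-\Delta^\diamond_{\infty,\mathfrak h}w(z)=\varepsilon^{-2}\big(2w(z)-\max_{x\in\mathcal N_{\mathfrak h}(z)}\mathcal I_hw(x)-\min_{x\in\mathcal N_{\mathfrak h}(z)}\mathcal I_hw(x)\big)$ for $w\in C(\overline\Omega)$. $\widetilde{\mathcal N}_{\mathfrak h}(z)=\{z\}\cup\{z'\in\mathcal N_h:\exists v_\theta\in\mathbb S_\theta,\ \hat\varphi_{z'}(z+\varepsilon v_\theta)>0\}$. (M.1): for every nonempty $S\subset\mathcal N_h^I$ there exist $z\in S$, $z'\in\mathcal N_h\setminus S$ with $z'\in\widetilde{\mathcal N}_{\mathfrak h}(z)$. (RHS.2): either (RHS.2a) $\sup_\Omega f<0$ or $\inf_\Omega f>0$, or (RHS.2b) $f\equiv0$. (OBS.1): $\chi\in C(\overline\Omega)$ and $\chi<g$ on $\partial\Omega$ for a given boundary datum $g\in C(\partial\Omega)$. Discrete obstacle operator: $\mathbb T_{\mathfrak h}[w;f,\chi](z)=\min\{-\Delta^\diamond_{\infty,\mathfrak h}w(z)-f(z),\,w(z)-\chi(z)\}$ for $z\in\mathcal N_h^I$. *)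

(* Defs.v *)
From HB Require Import structures.
From mathcomp Require Import all_boot all_order all_algebra.
From mathcomp Require Import all_classical all_reals all_analysis.
Set Implicit Arguments. Unset Strict Implicit. Unset Printing Implicit Defensive.
Import Order.TTheory GRing.Theory Num.Theory.
Import numFieldNormedType.Exports.
Local Open Scope classical_set_scope.
Local Open Scope ring_scope.

(* Points of R^d with d = n.+1 >= 1 are row vectors 'rV[R]_n.+1. *)
Section Defs.
Variables (R : realType) (n : nat).
Local Notation pt := 'rV[R]_n.+1.

Definition enorm (x : pt) : R := Num.sqrt (\sum_i x ord0 i ^+ 2).

Definition bdry (A : set pt) : set pt := closure A `\` interior A.

Definition dist_bdry (A : set pt) (x : pt) : R :=
  inf [set enorm (x - y) | y in bdry A].

Definition inner_set (A : set pt) (r : R) : set pt :=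
  [set x | A x /\ r < dist_bdry A x].

Definition set_diam (A : set pt) : R :=
  sup [set enorm (x - y) | x in A & y in A].

Definition bounded_pts (A : set pt) : Prop :=
  exists M : R, forall x, A x -> enorm x <= M.

(* continuous boundary: locally (after a rigid motion) the region below the
   graph of a continuous function of the first d-1 coordinates *)
Definition continuous_boundary (A : set pt) : Prop :=
  forall x0, bdry A x0 ->
  exists (r : R) (Q : 'M[R]_n.+1) (g : pt -> R),
    [/\ 0 < r, Q *m Q^T = 1%:M, continuous g,
     (forall y y' : pt, (forall i : 'I_n.+1, i != ord_max -> y ord0 i = y' ord0 i) ->
        g y = g y') &
     forall x, enorm (x - x0) < r ->
       (A x <-> ((x - x0) *m Q) ord0 ord_max < g ((x - x0) *m Q))].

Definition bounded_domain_cont_bdry (A : set pt) : Prop :=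
  [/\ A !=set0, open A, connected A, bounded_pts A & continuous_boundary A].

Definition simplex := {ffun 'I_n.+2 -> pt}.

Definition verts (K : simplex) : seq pt := [seq K i | i <- enum 'I_n.+2].

Definition aff_indep (K : simplex) : Prop :=
  forall l : 'I_n.+2 -> R, \sum_i l i = 0 -> \sum_i l i *: K i = 0 ->
    forall i, l i = 0.

Definition conv_seq (s : seq pt) : set pt :=
  [set x | exists l : pt -> R, [/\ forall p, 0 <= l p,
       \sum_(p <- undup s) l p = 1 & x = \sum_(p <- undup s) l p *: p]].

Definition csimplex (K : simplex) : set pt := conv_seq (verts K).

(* conforming mesh of nondegenerate closed simplices *)
Definition is_mesh (T : seq simplex) : Prop :=
  (forall K, K \in T -> aff_indep K) /\
  (forall K K', K \in T -> K' \in T ->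
     csimplex K `&` csimplex K' = conv_seq [seq p <- verts K | p \in verts K']).

Definition mesh_union (T : seq simplex) : set pt :=
  [set x | exists2 K, K \in T & csimplex K x].

Definition mesh_dom (T : seq simplex) : set pt := interior (mesh_union T).

Definition nodes (T : seq simplex) : seq pt := undup (flatten [seq verts K | K <- T]).

Definition meshsize (T : seq simplex) : R :=
  \big[Num.max/0]_(K <- T) set_diam (csimplex K).

(* V_h : functions affine on every simplex of T (single-valued, hence
   continuous piecewise linear on the closure of Omega_h) *)
Definition in_Vh (T : seq simplex) (w : pt -> R) : Prop :=
  forall K, K \in T -> exists (a : pt) (b : R),
    forall x, csimplex K x -> w x = \sum_i a ord0 i * x ord0 i + b.

Definition hat_basis (T : seq simplex) (phi : pt -> pt -> R) : Prop :=
  forall z, z \in nodes T ->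
    in_Vh T (phi z) /\ forall z', z' \in nodes T -> phi z z' = (z == z')%:R.

Definition interp (T : seq simplex) (phi : pt -> pt -> R) (w : pt -> R) (x : pt) : R :=
  \sum_(z <- nodes T) w z * phi z x.

Definition sphere_net (Sth : seq pt) (theta : R) : Prop :=
  [/\ forall v, v \in Sth -> enorm v = 1,
      forall v, v \in Sth -> - v \in Sth &
      forall v, enorm v = 1 -> exists2 vt, vt \in Sth & enorm (v - vt) <= theta].

Definition stencil (eps : R) (Sth : seq pt) (z : pt) : seq pt :=
  z :: [seq z + eps *: v | v <- Sth].

Definition neg_lap_inf (T : seq simplex) (phi : pt -> pt -> R) (eps : R)
    (Sth : seq pt) (w : pt -> R) (z : pt) : R :=
  eps ^-2 * (2 * w z
     - \big[Num.max/interp T phi w z]_(x <- stencil eps Sth z) interp T phi w x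
     - \big[Num.min/interp T phi w z]_(x <- stencil eps Sth z) interp T phi w x).

Definition obs_op (T : seq simplex) (phi : pt -> pt -> R) (eps : R) (Sth : seq pt)
    (f chi w : pt -> R) (z : pt) : R :=
  Num.min (neg_lap_inf T phi eps Sth w z - f z) (w z - chi z).

Definition interior_node (Om : set pt) (T : seq simplex) (eps : R) (z : pt) : Prop :=
  z \in nodes T /\ inner_set Om (2 * eps) z.
Definition boundary_node (Om : set pt) (T : seq simplex) (eps : R) (z : pt) : Prop :=
  z \in nodes T /\ ~ inner_set Om (2 * eps) z.

Definition cond_M1 (Om : set pt) (T : seq simplex) (phi : pt -> pt -> R) (eps : R)
    (Sth : seq pt) : Prop :=
  forall K : set pt, K !=set0 -> (forall z, K z -> interior_node Om T eps z) ->
  exists z z', [/\ K z, z' \in nodes T, ~ K z' &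
     (z' = z \/ exists2 vt, vt \in Sth & 0 < phi z' (z + eps *: vt))].

Definition rhs2a (Om : set pt) (f : pt -> R) : Prop :=
  sup [set f x | x in Om] < 0 \/ 0 < inf [set f x | x in Om].
Definition rhs2b (Om : set pt) (f : pt -> R) : Prop := forall x, Om x -> f x = 0.

Definition obs1 (Om : set pt) (chi g : pt -> R) : Prop :=
  [/\ {within closure Om, continuous chi}, {within bdry Om, continuous g} &
      forall x, bdry Om x -> chi x < g x].

End Defs.

(* Main.v *)
Require Import Defs.
From HB Require Import structures.
From mathcomp Require Import all_boot all_order all_algebra.
From mathcomp Require Import all_classical all_reals all_analysis.
From mathcomp Require Import ring lra.
Import Order.TTheory GRing.Theory Num.Theory.
Import numFieldNormedType.Exports.
Local Open Scope classical_set_scope.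
Local Open Scope ring_scope.

Section E.
Variables (R : realType) (n : nat).
Implicit Types x y : 'rV[R]_n.+1.

Lemma enorm_ge0 x : 0 <= enorm x.
Proof. exact: sqrtr_ge0. Qed.

Lemma enormZ a x : enorm (a *: x) = `|a| * enorm x.
Proof.
rewrite /enorm.
under eq_bigr => i _ do rewrite mxE exprMn.
by rewrite -mulr_sumr sqrtrM ?sqr_ge0 // sqrtr_sqr.
Qed.

Lemma enormN x : enorm (- x) = enorm x.
Proof. by rewrite -scaleN1r enormZ normrN normr1 mul1r. Qed.

Lemma sum_sq_ge0 (F : 'I_n.+1 -> R) : 0 <= \sum_i F i ^+ 2.
Proof. by apply: sumr_ge0 => i _; exact: sqr_ge0. Qed.

Lemma CS (a b : 'I_n.+1 -> R) :
  (\sum_i a i * b i) ^+ 2 <= (\sum_i a i ^+ 2) * (\sum_i b i ^+ 2).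
Proof.
set A := \sum_i a i ^+ 2; set B := \sum_i b i ^+ 2; set C := \sum_i a i * b i.
have key : 0 <= \sum_i (a i * B - b i * C) ^+ 2 by exact: sum_sq_ge0.
have E : \sum_i (a i * B - b i * C) ^+ 2 = B * (A * B - C ^+ 2).
  have -> : \sum_i (a i * B - b i * C) ^+ 2 =
     \sum_i (B ^+ 2 * a i ^+ 2 - (2 * B * C) * (a i * b i) + C ^+ 2 * b i ^+ 2).
    by apply: eq_bigr => i _; ring.
  rewrite big_split /= sumrB -!mulr_sumr -/A -/B -/C; ring.
rewrite E in key.
have B0 : 0 <= B by exact: sum_sq_ge0.
have [Bz|Bp] := eqVneq B 0.
  have bz : forall i, b i = 0.
    move=> i; apply/eqP; rewrite -sqrf_eq0; apply/eqP.
    by apply: (psumr_eq0P (P := xpredT) (F := fun i => b i ^+ 2)) => // j _; exact: sqr_ge0.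
  have -> : C = 0 by rewrite /C big1 // => i _; rewrite bz mulr0.
  by rewrite expr0n /= mulr_ge0 // sum_sq_ge0.
have Bpos : 0 < B by rewrite lt_def Bp B0.
by rewrite -subr_ge0; move: key; rewrite pmulr_rge0.
Qed.

Lemma enorm_triangle x y : enorm (x + y) <= enorm x + enorm y.
Proof.
rewrite /enorm.
set A := \sum_i x ord0 i ^+ 2; set B := \sum_i y ord0 i ^+ 2.
set C := \sum_i x ord0 i * y ord0 i.
have -> : \sum_i (x + y) ord0 i ^+ 2 = A + 2 * C + B.
  rewrite /A /B /C mulr_sumr -!big_split /=; apply: eq_bigr => i _; rewrite mxE; ring.
have A0 : 0 <= A by exact: sum_sq_ge0.
have B0 : 0 <= B by exact: sum_sq_ge0.
have sA := sqrtr_ge0 A; have sB := sqrtr_ge0 B.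
have CS' : C <= Num.sqrt A * Num.sqrt B.
  rewrite -sqrtrM //.
  apply: le_trans (ler_norm C) _.
  rewrite -sqrtr_sqr; apply: ler_wsqrtr; exact: CS.
rewrite -(ger0_norm (addr_ge0 sA sB)) -sqrtr_sqr ler_sqrt ?sqr_ge0 //.
rewrite sqrrD !sqr_sqrtr //; lra.
Qed.
End E.
Lemma seg_cont (R : realType) n (z u : 'rV[R]_n.+1) :
  continuous (fun t : R => z + t *: u).
Proof.
move=> t. have := (@continuousD R 'rV[R]_n.+1 R (fun=> z) (fun t : R => t *: u) t).
apply. exact: cst_continuous.
exact: scalel_continuous.
Qed.
Lemma seg_conn (R : realType) n (z u : 'rV[R]_n.+1) :
  connected ((fun t : R => z + t *: u) @` `[0, 1]).
Proof.
apply: connected_continuous_connected; first exact: segment_connected.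
apply: continuous_subspaceT; exact: seg_cont.
Qed.

Section Geo.
Variables (R : realType) (n : nat).
Local Notation pt := 'rV[R]_n.+1.

Lemma dist_lb (Om : set pt) z y : bdry Om y -> dist_bdry Om z <= enorm (z - y).
Proof.
move=> by_; rewrite /dist_bdry.
have : has_lbound [set enorm (z - y) | y in bdry Om].
  by exists 0 => _ [y' _ <-]; exact: enorm_ge0.
by move/ge_inf; apply; exists y.
Qed.

Lemma dist_pos_bdry (Om : set pt) z : 0 < dist_bdry Om z -> bdry Om !=set0.
Proof.
move=> d0; apply/set0P/negP => /eqP E.
by move: d0; rewrite /dist_bdry E image_set0 inf0 ltxx.
Qed.

Lemma dist_shift (Om : set pt) z x : bdry Om !=set0 ->
  dist_bdry Om z - enorm (z - x) <= dist_bdry Om x.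
Proof.
move=> [y0 y0b]; apply: lb_le_inf; first by exists (enorm (x - y0)), y0.
move=> _ [y yb <-].
have := @dist_lb Om z y yb.
have := @enorm_triangle R n (z - x) (x - y).
have -> : z - x + (x - y) = z - y by rewrite addrA subrK.
move=> h1 h2; rewrite lerBlDl; apply: le_trans h2 _; exact: h1.
Qed.

Lemma seg_in (Om : set pt) z (u : pt) r :
  open Om -> Om z -> (forall y, bdry Om y -> r < enorm (z - y)) ->
  enorm u <= r -> Om (z + u).
Proof.
move=> oOm Omz hb ur.
set s := fun t : R => z + t *: u.
set C := s @` `[0, 1].
have CB : C `&` Om = C.
  apply: (@seg_conn R n z u).
  - exists z; split => //; exists 0; last by rewrite /s scale0r addr0.
    by rewrite /= in_itv /= lexx ler01.
  - by exists Om.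
  - exists (closure Om); first exact: closed_closure.
    apply/seteqP; split => y [Cy H]; split => //; first exact: subset_closure.
    apply: contrapT => nOm.
    have by_ : bdry Om y by split => // /interior_subset.
    have := hb y by_.
    case: Cy => t; rewrite /= in_itv /= => /andP[t0 t1] <-.
    rewrite /s opprD addrA subrr add0r enormN enormZ ger0_norm //.
    move=> h; have : t * enorm u <= r.
      apply: le_trans ur; rewrite -[leRHS]mul1r; apply: ler_wpM2r => //; exact: enorm_ge0.
    by rewrite leNgt h.
have : C (z + u) by exists 1; [by rewrite /= in_itv /= lexx ler01 | by rewrite /s scale1r].
by rewrite -CB => -[].
Qed.

End Geo.
Section Rep.
Variables (R : realType) (n : nat).
Local Notation pt := 'rV[R]_n.+1.

Lemma sum_delta0 (s : seq pt) (F : pt -> R) p : p \notin s ->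
  \sum_(q <- s) F q * (q == p)%:R = 0.
Proof.
move=> ps; rewrite big_seq big1 // => q qs.
have -> : (q == p) = false by apply/negP => /eqP E; move: ps; rewrite -E qs.
by rewrite mulr0.
Qed.

Lemma sum_delta (s : seq pt) (F : pt -> R) p : uniq s -> p \in s ->
  \sum_(q <- s) F q * (q == p)%:R = F p.
Proof.
elim: s => // q s IH /= /andP[qs us]; rewrite in_cons big_cons.
case: (eqVneq q p) => [E|qp] /=.
  by subst q => _; rewrite mulr1 sum_delta0 ?addr0.
by rewrite mulr0 add0r => ps; apply: IH => //.
Qed.

Lemma sum_deltaV0 (s : seq pt) p : p \notin s ->
  \sum_(q <- s) (q == p)%:R *: q = 0.
Proof.
move=> ps; rewrite big_seq big1 // => q qs.
have -> : (q == p) = false by apply/negP => /eqP E; move: ps; rewrite -E qs.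
by rewrite scale0r.
Qed.

Lemma sum_deltaV (s : seq pt) p : uniq s -> p \in s ->
  \sum_(q <- s) (q == p)%:R *: q = p.
Proof.
elim: s => // q s IH /= /andP[qs us]; rewrite in_cons big_cons.
case: (eqVneq q p) => [E|qp] /=.
  by subst q => _; rewrite scale1r sum_deltaV0 ?addr0.
by rewrite scale0r add0r => ps; apply: IH => //.
Qed.

Lemma verts_nodes {T : seq (simplex R n)} {K p} : K \in T -> p \in verts K -> p \in nodes T.
Proof. by move=> KT pK; rewrite mem_undup; apply/flatten_mapP; exists K. Qed.

Lemma interp_node T phi (g : pt -> R) z : hat_basis T phi -> z \in nodes T ->
  interp T phi g z = g z.
Proof.
move=> hb zN; rewrite /interp.
rewrite (eq_big_seq (fun q => g q * (q == z)%:R)); first by rewrite sum_delta // undup_uniq.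
by move=> q qN; rewrite (proj2 (hb q qN)).
Qed.

Lemma csimplex_vert (K : simplex R n) p : p \in verts K -> csimplex K p.
Proof.
move=> pK; exists (fun q => (q == p)%:R); split.
- by move=> q; rewrite ler0n.
- by rewrite (eq_bigr (fun q : pt => 1 * (q == p)%:R)) ?sum_delta ?undup_uniq ?mem_undup // => q _; rewrite mul1r.
- by rewrite sum_deltaV ?undup_uniq ?mem_undup.
Qed.

Lemma rep_simplex T phi K (x : pt) : hat_basis T phi -> K \in T -> csimplex K x ->
  exists (ps : seq pt) (l : pt -> R), [/\ uniq ps, {subset ps <= nodes T},
    (forall p, 0 <= l p), \sum_(p <- ps) l p = 1 &
    forall g, interp T phi g x = \sum_(p <- ps) l p * g p].
Proof.
move=> hb KT [l [l0 l1 ->]].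
exists (undup (verts K)), l; split => //.
- exact: undup_uniq.
- by move=> p; rewrite mem_undup; exact: verts_nodes.
move=> g.
set ps := undup (verts K).
have phix : forall m, m \in nodes T ->
    phi m (\sum_(p <- ps) l p *: p) = \sum_(p <- ps) l p * (m == p)%:R.
  move=> m mN; have [hV _] := hb m mN.
  have [a [b Hab]] := hV K KT.
  rewrite Hab; last by exists l.
  have -> : \sum_(p <- ps) l p * (m == p)%:R = \sum_(p <- ps) l p * phi m p.
    apply: eq_big_seq => p; rewrite mem_undup => pK.
    by rewrite (proj2 (hb m mN) p (verts_nodes KT pK)).
  have -> : \sum_(p <- ps) l p * phi m p =
      \sum_(p <- ps) l p * (\sum_i a ord0 i * p ord0 i + b).
    apply: eq_big_seq => p; rewrite mem_undup => pK.
    by rewrite Hab //; exact: csimplex_vert.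
  under [RHS]eq_bigr => p _ do rewrite mulrDr mulr_sumr.
  rewrite big_split /= -mulr_suml l1 mul1r; congr (_ + _).
  rewrite exchange_big /=; apply: eq_bigr => i _.
  rewrite summxE mulr_sumr; apply: eq_bigr => p _; rewrite mxE; ring.
rewrite /interp.
rewrite (eq_big_seq (fun m => g m * \sum_(p <- ps) l p * (m == p)%:R)); last first.
  by move=> m mN; rewrite phix.
under eq_bigr => m _ do rewrite mulr_sumr.
rewrite exchange_big /=; apply: eq_big_seq => p; rewrite mem_undup => pK.
rewrite (eq_bigr (fun m => (l p * g m) * (m == p)%:R)); last by move=> m _; ring.
by rewrite sum_delta ?undup_uniq // (verts_nodes KT pK).
Qed.
End Rep.

Section Misc.
Variable (R : realType).

Lemma bigmax_ge {T : eqType} (F : T -> R) x0 s x : x \in s ->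
  F x <= \big[Num.max/x0]_(y <- s) F y.
Proof.
elim: s => // a s IH; rewrite in_cons big_cons => /orP[/eqP->|xs].
  by rewrite le_max lexx.
by rewrite le_max IH ?orbT.
Qed.

Lemma bigmax_ge_idx {T : eqType} (F : T -> R) x0 s :
  x0 <= \big[Num.max/x0]_(y <- s) F y.
Proof.
elim: s => [|a s IH]; first by rewrite big_nil.
by rewrite big_cons le_max IH orbT.
Qed.

Lemma bigmax_ex {T : eqType} (F : T -> R) a s :
  exists2 x, x \in a :: s & \big[Num.max/F a]_(y <- a :: s) F y = F x.
Proof.
elim: s => [|b s [x xs IH]]; first by exists a; rewrite ?mem_head // big_cons big_nil maxxx.
move: IH; rewrite !big_cons => IH.
rewrite maxCA IH.
have [le|lt] := leP (F b) (F x).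
  exists x => //.
  by move: xs; rewrite !in_cons => /orP[H|H]; rewrite H ?orbT.
exists b; first by rewrite !in_cons eqxx orbT.
by [].
Qed.

Lemma bigmin_le {T : eqType} (F : T -> R) x0 s x : x \in s ->
  \big[Num.min/x0]_(y <- s) F y <= F x.
Proof.
elim: s => // a s IH; rewrite in_cons big_cons => /orP[/eqP->|xs].
  by rewrite ge_min lexx.
by rewrite ge_min IH ?orbT.
Qed.

Lemma bigmin_le_idx {T : eqType} (F : T -> R) x0 s :
  \big[Num.min/x0]_(y <- s) F y <= x0.
Proof.
elim: s => [|a s IH]; first by rewrite big_nil.
by rewrite big_cons ge_min IH orbT.
Qed.

Lemma bigmin_ex {T : eqType} (F : T -> R) a s :
  exists2 x, x \in a :: s & \big[Num.min/F a]_(y <- a :: s) F y = F x.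
Proof.
elim: s => [|b s [x xs IH]]; first by exists a; rewrite ?mem_head // big_cons big_nil minxx.
move: IH; rewrite !big_cons => IH.
rewrite minCA IH.
have [le|lt] := leP (F b) (F x).
  exists b; first by rewrite !in_cons eqxx orbT.
  by [].
exists x => //.
by move: xs; rewrite !in_cons => /orP[H|H]; rewrite H ?orbT.
Qed.

Lemma seq_argmin {T : eqType} (F : T -> R) (s : seq T) (x0 : T) : x0 \in s ->
  exists2 x, x \in s & forall y, y \in s -> F x <= F y.
Proof.
move=> x0s.
have [x xs E] := bigmin_ex F x0 s.
exists x.
  by move: xs; rewrite in_cons => /orP[/eqP E'|//]; rewrite E'.
move=> y ys; rewrite -E; apply: bigmin_le; by rewrite in_cons ys orbT.
Qed.

Lemma seq_argmax {T : eqType} (F : T -> R) (s : seq T) (x0 : T) : x0 \in s ->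
  exists2 x, x \in s & forall y, y \in s -> F y <= F x.
Proof.
move=> /(seq_argmin (fun x => - F x)) [x xs H]; exists x => // y ys.
by rewrite -lerN2; apply: H.
Qed.

Lemma conv_le {T : eqType} (ps : seq T) (l g : T -> R) c :
  (forall p, 0 <= l p) -> \sum_(p <- ps) l p = 1 ->
  (forall p, p \in ps -> 0 < l p -> g p <= c) ->
  \sum_(p <- ps) l p * g p <= c.
Proof.
move=> l0 l1 H.
have -> : c = \sum_(p <- ps) l p * c by rewrite -mulr_suml l1 mul1r.
rewrite big_seq [X in _ <= X]big_seq; apply: ler_sum => p pps.
have [lz|lp] := eqVneq (l p) 0; first by rewrite lz !mul0r.
apply: ler_wpM2l => //; apply: H => //; by rewrite lt_def lp l0.
Qed.

Lemma conv_ge {T : eqType} (ps : seq T) (l g : T -> R) c :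
  (forall p, 0 <= l p) -> \sum_(p <- ps) l p = 1 ->
  (forall p, p \in ps -> 0 < l p -> c <= g p) ->
  c <= \sum_(p <- ps) l p * g p.
Proof.
move=> l0 l1 H; rewrite -lerN2 -sumrN.
under eq_bigr => p _ do rewrite -mulrN.
apply: conv_le => // p pps lp; rewrite lerN2; exact: H.
Qed.

Lemma conv_eq {T : eqType} (ps : seq T) (l g : T -> R) c :
  (forall p, 0 <= l p) -> \sum_(p <- ps) l p = 1 ->
  (forall p, p \in ps -> 0 < l p -> g p <= c) ->
  \sum_(p <- ps) l p * g p = c ->
  forall p, p \in ps -> 0 < l p -> g p = c.
Proof.
move=> l0 l1 H E.
have E0 : \sum_(p <- ps) l p * (c - g p) = 0.
  under eq_bigr => p _ do rewrite mulrBr.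
  by rewrite sumrB -mulr_suml l1 mul1r E subrr.
have : \sum_(p <- ps | p \in ps) l p * (c - g p) == 0 by rewrite -big_seq E0.
rewrite psumr_eq0; last first.
  move=> p pps; have [lz|lp] := eqVneq (l p) 0; first by rewrite lz mul0r.
  by rewrite mulr_ge0 // subr_ge0 H // lt_def lp l0.
move=> /allP A p pps lp; have /implyP/(_ pps) := A p pps.
rewrite mulf_eq0 (gt_eqF lp) /= subr_eq0 => /eqP; by move=> ->.
Qed.

Lemma meshsize_ge0 n (T : seq (simplex R n)) : 0 <= meshsize T.
Proof. exact: bigmax_ge_idx. Qed.

Lemma rhs2a_sign n (Om : set 'rV[R]_n.+1) f z : rhs2a Om f -> Om z ->
  (forall y, Om y -> f y < 0) \/ (forall y, Om y -> 0 < f y).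
Proof.
move=> [hs|hi] Omz; [left|right] => y Omy.
- have hsup : has_sup [set f x | x in Om].
    apply: contrapT => /sup_out E; by move: hs; rewrite E ltxx.
  apply: le_lt_trans hs; apply: sup_upper_bound => //; by exists y.
- have hinf : has_inf [set f x | x in Om].
    apply: contrapT => /inf_out E; by move: hi; rewrite E ltxx.
  apply: lt_le_trans hi _; apply: (ge_inf hinf.2); by exists y.
Qed.
End Misc.

Section Stencil.
Variables (R : realType) (n : nat).
Local Notation pt := 'rV[R]_n.+1.

Lemma stencil_rep (Om : set pt) (T : seq (simplex R n)) phi eps Sth theta z x :
  open Om -> sphere_net Sth theta -> meshsize T <= eps ->
  inner_set Om (meshsize T) `<=` mesh_dom T -> hat_basis T phi ->
  interior_node Om T eps z -> x \in stencil eps Sth z ->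
  exists (ps : seq pt) (l : pt -> R), [/\ uniq ps, {subset ps <= nodes T},
    (forall p, 0 <= l p), \sum_(p <- ps) l p = 1 &
    forall g, interp T phi g x = \sum_(p <- ps) l p * g p].
Proof.
move=> oOm [Sn _ _] hme hin hb [zN [Omz dz]] xs.
have e0 : 0 <= eps := le_trans (@meshsize_ge0 R n T) hme.
move: xs; rewrite /stencil in_cons => /orP[/eqP->|/mapP[vt vtS ->]].
  exists [:: z], (fun _ => 1); split => //.
  - by move=> p; rewrite inE => /eqP->.
  - by rewrite big_seq1.
  - by move=> g; rewrite big_seq1 mul1r interp_node.
have nu : enorm (eps *: vt) = eps by rewrite enormZ Sn // mulr1 ger0_norm.
have hbz : forall y, bdry Om y -> 2 * eps < enorm (z - y).
  move=> y yb; apply: lt_le_trans dz _; exact: dist_lb.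
have Omx : Om (z + eps *: vt).
  apply: (@seg_in R n Om z (eps *: vt) (2*eps) oOm Omz hbz); rewrite nu; lra.
have d0 : 0 < dist_bdry Om z by apply: le_lt_trans dz; lra.
have dx := @dist_shift R n Om z (z + eps *: vt) (@dist_pos_bdry R n Om z d0).
have nu' : enorm (z - (z + eps *: vt)) = eps by rewrite opprD addrA subrr add0r enormN.
rewrite nu' in dx.
have : inner_set Om (meshsize T) (z + eps *: vt) by split => //; lra.
move/hin/interior_subset => [K KT Kx].
exact: (@rep_simplex R n T phi K _ hb KT Kx).
Qed.
End Stencil.

Lemma phi_interp (R : realType) n (T : seq (simplex R n)) phi x z' :
  z' \in nodes T -> phi z' x = interp T phi (fun y => (y == z')%:R) x.
Proof.
move=> zN; rewrite /interp.
rewrite (eq_bigr (fun m => phi m x * (m == z')%:R)); last by move=> m _; rewrite mulrC.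
by rewrite sum_delta // undup_uniq.
Qed.

Theorem theorem5p5 (R : realType) (n : nat) (Om : set 'rV[R]_n.+1)
    (T : seq (simplex R n)) (phi : 'rV[R]_n.+1 -> 'rV[R]_n.+1 -> R)
    (eps theta : R) (Sth : seq 'rV[R]_n.+1)
    (f chi g w v : 'rV[R]_n.+1 -> R) :
  bounded_domain_cont_bdry Om ->
  is_mesh T ->
  inner_set Om (meshsize T) `<=` mesh_dom T ->
  mesh_dom T `<=` Om ->
  hat_basis T phi ->
  meshsize T <= eps -> eps <= set_diam Om ->
  0 < theta -> theta <= 1 -> sphere_net Sth theta ->
  obs1 Om chi g ->
  (rhs2a Om f \/ rhs2b Om f) ->
  (rhs2b Om f -> cond_M1 Om T phi eps Sth) ->
  in_Vh T w -> in_Vh T v ->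
  (forall z, interior_node Om T eps z ->
     obs_op T phi eps Sth f chi w z <= 0 /\ 0 <= obs_op T phi eps Sth f chi v z) ->
  (forall z, boundary_node Om T eps z -> w z <= v z) ->
  forall z, z \in nodes T -> w z <= v z.
Proof.
move=> [_ oOm _ _ _] _ hin _ hb hme _ _ _ hsn _ hrhs hM1 _ _ hTop hbd.
move=> z0 z0N; rewrite leNgt; apply/negP => lt0.
set N := nodes T.
have uN : uniq N := undup_uniq _.
have [x1 x1N x1max] := @seq_argmax R _ (fun p => w p - v p) _ _ z0N.
set M := w x1 - v x1.
have Mub : forall p, p \in N -> w p - v p <= M by move=> p pN; exact: x1max.
have M0 : 0 < M by apply: lt_le_trans (x1max _ z0N); rewrite subr_gt0.
set Sq := [seq p <- N | w p - v p == M].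
have SqP : forall p, p \in Sq <-> p \in N /\ w p - v p = M.
  by move=> p; rewrite mem_filter; split => [/andP[/eqP ? ?]|[? ->]] //; rewrite eqxx.
have x1S : x1 \in Sq by apply/SqP.
have Sint : forall p, p \in Sq -> interior_node Om T eps p.
  move=> p /SqP[pN pM]; have [h|h] := pselect (inner_set Om (2*eps) p); first by split.
  have := hbd p (conj pN h); lra.
have e0 : 0 <= eps := le_trans (@meshsize_ge0 R n T) hme.
have hobs : forall p, p \in Sq ->
    neg_lap_inf T phi eps Sth w p - f p <= 0 /\ f p <= neg_lap_inf T phi eps Sth v p.
  move=> p pS; have [h1 h2] := hTop p (Sint p pS).
  move: h2; rewrite /obs_op le_min => /andP[a b].
  move: h1; rewrite /obs_op ge_min => /orP[c|c]; first by split => //; lra.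
  by have [_ pM] := (SqP p).1 pS; exfalso; lra.
have Omp : forall p, p \in Sq -> Om p by move=> p /Sint [_ []].
have [ez|enz] := eqVneq eps 0.
  have L0 : forall gg p, neg_lap_inf T phi eps Sth gg p = 0.
    by move=> gg p; rewrite /neg_lap_inf ez expr0n /= invr0 mul0r.
  have fz : f x1 = 0 by have [a b] := hobs x1 x1S; rewrite !L0 in a b; lra.
  case: hrhs => [h2a|h2b].
    have [h|h] := @rhs2a_sign R n Om f x1 h2a (Omp x1 x1S).
      by have := h x1 (Omp x1 x1S); rewrite fz ltxx.
    by have := h x1 (Omp x1 x1S); rewrite fz ltxx.
  have [||z [z' [Kz z'N nKz' H]]] := hM1 h2b (fun p => p \in Sq).
  - by exists x1.
  - by move=> p; exact: Sint.
  case: H => [E|[vt _]]; first by case: nKz'; rewrite /= E.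
  rewrite ez scale0r addr0 (proj2 (hb z' z'N) z (Sint z Kz).1).
  by case: eqVneq => [E|_]; [case: nKz'; rewrite /= E | rewrite ltxx].
have ep : 0 < eps by rewrite lt_def enz e0.
have ie : 0 < eps ^-2 by rewrite invr_gt0 exprn_gt0.
pose Iw := interp T phi w. pose Iv := interp T phi v.
pose Mx := fun gg p => \big[Num.max/interp T phi gg p]_(x <- stencil eps Sth p) interp T phi gg x.
pose Mn := fun gg p => \big[Num.min/interp T phi gg p]_(x <- stencil eps Sth p) interp T phi gg x.
have Lap : forall gg p, neg_lap_inf T phi eps Sth gg p = eps ^-2 * (2 * gg p - Mx gg p - Mn gg p)
  by [].
have rep : forall p x, p \in Sq -> x \in stencil eps Sth p ->
    exists (ps : seq 'rV[R]_n.+1) (l : 'rV[R]_n.+1 -> R), [/\ {subset ps <= N},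
    (forall q, 0 <= l q), \sum_(q <- ps) l q = 1 &
    forall gg, interp T phi gg x = \sum_(q <- ps) l q * gg q].
  move=> p x pS xs.
  have [ps [l [_ ? ? ? ?]]] := @stencil_rep R n Om T phi eps Sth theta p x oOm hsn hme hin hb (Sint p pS) xs.
  by exists ps, l.
have diffle : forall p x, p \in Sq -> x \in stencil eps Sth p -> Iw x <= Iv x + M.
  move=> p x pS xs; have [ps [l [psN l0 l1 hI]]] := rep p x pS xs.
  rewrite /Iw /Iv !hI -lerBlDl -sumrB.
  under eq_bigr => q _ do rewrite -mulrBr.
  apply: conv_le => // q qps _; exact: Mub (psN q qps).
have supp : forall p x, p \in Sq -> x \in stencil eps Sth p -> Iw x = Iv x + M ->
   exists (ps : seq 'rV[R]_n.+1) (l : 'rV[R]_n.+1 -> R), [/\ (forall q, 0 <= l q),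
     \sum_(q <- ps) l q = 1, (forall q, q \in ps -> 0 < l q -> q \in Sq) &
     forall gg, interp T phi gg x = \sum_(q <- ps) l q * gg q].
  move=> p x pS xs E; have [ps [l [psN l0 l1 hI]]] := rep p x pS xs.
  exists ps, l; split => // q qps lq; apply/SqP; split; first exact: psN.
  apply: (@conv_eq R _ ps l (fun q => w q - v q) M l0 l1 _ _ q qps lq).
    by move=> r rps _; exact: Mub (psN _ rps).
  under eq_bigr => r _ do rewrite mulrBr.
  by rewrite sumrB -!hI -/(Iw x) -/(Iv x) E addrAC subrr add0r.
have eqs : forall p, p \in Sq -> Mx w p = Mx v p + M /\ Mn w p = Mn v p + M.
  move=> p pS.
  have [xw xwS Ew] := @bigmax_ex R _ (interp T phi w) p [seq p + eps *: vt | vt <- Sth].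
  have [xv xvS Ev] := @bigmin_ex R _ (interp T phi v) p [seq p + eps *: vt | vt <- Sth].
  change (Mx w p = Iw xw) in Ew; change (Mn v p = Iv xv) in Ev.
  have h1 : Mx w p <= Mx v p + M.
    rewrite Ew; apply: le_trans (diffle p xw pS xwS) _; rewrite lerD2r; exact: bigmax_ge.
  have h2 : Mn w p <= Mn v p + M.
    rewrite Ev; apply: le_trans (diffle p xv pS xvS); exact: bigmin_le.
  have [a b] := hobs p pS; rewrite !Lap in a b.
  have c : 2 * w p - Mx w p - Mn w p <= 2 * v p - Mx v p - Mn v p.
    rewrite -(ler_pM2l ie); lra.
  have [_ pM] := (SqP p).1 pS.
  split; lra.
have Iz : forall gg p, p \in Sq -> interp T phi gg p = gg p.
  by move=> gg p /SqP[pN _]; rewrite interp_node.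
case: hrhs => [h2a|h2b].
  have [hneg|hpos] := @rhs2a_sign R n Om f x1 h2a (Omp x1 x1S).
  - have [z zS zmax] := @seq_argmax R _ w Sq x1 x1S.
    have [a _] := hobs z zS; rewrite Lap in a.
    have fz := hneg z (Omp z zS).
    have A : 2 * w z - Mx w z - Mn w z < 0.
      by rewrite -(pmulr_rlt0 _ ie); lra.
    have Mnz : Mn w z <= w z by rewrite -(Iz w z zS); exact: bigmin_le_idx.
    have [xw xwS Ew] := @bigmax_ex R _ (interp T phi w) z [seq z + eps *: vt | vt <- Sth].
    change (Mx w z = Iw xw) in Ew.
    have [e1 e2] := eqs z zS.
    have E : Iw xw = Iv xw + M.
      apply/eqP; rewrite eq_le (diffle z xw zS xwS) /=.
      have : Iv xw <= Mx v z by exact: bigmax_ge.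
      lra.
    have [ps [l [l0 l1 pS' hI]]] := supp z xw zS xwS E.
    have : Iw xw <= w z.
      rewrite /Iw hI; apply: conv_le => // q qps lq; exact: zmax (pS' q qps lq).
    lra.
  - have [z zS zmin] := @seq_argmin R _ v Sq x1 x1S.
    have [_ b] := hobs z zS; rewrite Lap in b.
    have fz := hpos z (Omp z zS).
    have A : 0 < 2 * v z - Mx v z - Mn v z.
      by rewrite -(pmulr_rgt0 _ ie); lra.
    have Mxz : v z <= Mx v z by rewrite -(Iz v z zS); exact: bigmax_ge_idx.
    have [xv xvS Ev] := @bigmin_ex R _ (interp T phi v) z [seq z + eps *: vt | vt <- Sth].
    change (Mn v z = Iv xv) in Ev.
    have [e1 e2] := eqs z zS.
    have E : Iw xv = Iv xv + M.
      apply/eqP; rewrite eq_le (diffle z xv zS xvS) /=.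
      have : Mn w z <= Iw xv by exact: bigmin_le.
      lra.
    have [ps [l [l0 l1 pS' hI]]] := supp z xv zS xvS E.
    have : v z <= Iv xv.
      rewrite /Iv hI; apply: conv_ge => // q qps lq; exact: zmin (pS' q qps lq).
    lra.
have f0 : forall p, p \in Sq -> f p = 0 by move=> p pS; exact: h2b p (Omp p pS).
have [zt ztS ztmax] := @seq_argmax R _ v Sq x1 x1S.
set vmax := v zt.
set St := [seq p <- Sq | v p == vmax].
have StP : forall p, p \in St <-> p \in Sq /\ v p = vmax.
  by move=> p; rewrite mem_filter; split => [/andP[/eqP ? ?]|[? ->]] //; rewrite eqxx.
have key : forall p, p \in St -> forall x, x \in stencil eps Sth p ->
    Iw x = Iv x + M /\ Iv x = vmax.
  move=> p /StP[pS pv] x xs.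
  have [xw xwS Ew] := @bigmax_ex R _ (interp T phi w) p [seq p + eps *: vt | vt <- Sth].
  change (Mx w p = Iw xw) in Ew.
  have [e1 e2] := eqs p pS.
  have Ivw : Iv xw <= Mx v p by exact: bigmax_ge.
  have E : Iw xw = Iv xw + M.
    apply/eqP; rewrite eq_le (diffle p xw pS xwS) /=; lra.
  have [ps [l [l0 l1 pS' hI]]] := supp p xw pS xwS E.
  have : Iv xw <= vmax.
    rewrite /Iv hI; apply: conv_le => // q qps lq; exact: ztmax (pS' q qps lq).
  move=> Ivm.
  have [a _] := hobs p pS; rewrite Lap f0 // subr0 in a.
  have A : 2 * w p - Mx w p - Mn w p <= 0 by rewrite -(pmulr_rle0 _ ie).
  have [_ pM] := (SqP p).1 pS.
  have h1 : Mn v p <= Iv x by exact: bigmin_le.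
  have h2 : Iv x <= Mx v p by exact: bigmax_ge.
  have h3 : Mn w p <= Iw x by exact: bigmin_le.
  have h4 := diffle p x pS xs.
  split; lra.
have [||z [z' [Kz z'N nKz' H]]] := hM1 h2b (fun p => p \in St).
- by exists zt; apply/StP.
- by move=> p /StP[pS _]; exact: Sint.
case: H => [E|[vt vtS ph]]; first by case: nKz'; rewrite /= E.
have xs : z + eps *: vt \in stencil eps Sth z by rewrite /stencil in_cons; apply/orP; right; apply: (map_f (fun u => z + eps *: u)).
have [E1 E2] := key z Kz _ xs.
have zS : z \in Sq by have [] := (StP z).1 Kz.
have [ps [l [l0 l1 pS' hI]]] := supp z _ zS xs E1.
rewrite (@phi_interp R n T phi _ z' z'N) hI in ph.
have [q qps [lq qz]] : exists2 q, q \in ps & 0 < l q /\ q = z'.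
  apply: contrapT => Hn; move: ph; rewrite big_seq big1 ?ltxx // => q qps.
  have [qz|qz] := eqVneq q z'; last by rewrite mulr0.
  have : ~ 0 < l q by move=> lq; apply: Hn; exists q.
  move/negP; rewrite lt_def negb_and => /orP[/negPn/eqP->|]; first by rewrite mul0r.
  by rewrite l0.
subst q.
have z'S := pS' z' qps lq.
have vz' : v z' = vmax.
  apply: (@conv_eq R _ ps l v vmax l0 l1 _ _ z' qps lq).
    by move=> r rps lr; exact: ztmax (pS' r rps lr).
  by rewrite -hI.
by case: nKz'; apply/StP.
Qed.
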